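(* If $F$ is a field of non-zero characteristic $p$, then $\text{Ш}_F(F)$ is not a noetherian ring.
   Context: $\text{Ш}_F(F)=\bigoplus_{n\in\mathbb{N}} F\,\mathbf{1}^{\otimes (n+1)}$ is the shuffle Baxter $F$-algebra on $F$ (free Baxter $F$-algebra on the empty set) of weight $\lambda\in F$, with multiplication determined by $\mathbf{1}^{\otimes (m+1)} \mathbf{1}^{\otimes (n+1)} = \sum_{k=0}^m \binom{m+n-k}{n}\binom{n}{k} \lambda^k \mathbf{1}^{\otimes (m+n+1-k)}$ and Baxter operator $P(\mathbf{1}^{\otimes(n+1)})=\mathbf{1}^{\otimes(n+2)}$. *)

(* Defs.v *)
From mathcomp Require Import all_boot all_order all_algebra.
Set Implicit Arguments. Unset Strict Implicit. Unset Printing Implicit Defensive.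
Import GRing.Theory.
Local Open Scope ring_scope.

(* The shuffle Baxter F-algebra  Sha_F(F) = \bigoplus_{n} F 1^{(x)(n+1)}  of
   weight [lam].  Its underlying F-vector space is modelled by {poly F}:
   an element  \sum_n a_n 1^{(x)(n+1)}  is represented by the finitely
   supported coefficient sequence (a_n), i.e. the polynomial \sum_n a_n 'X^n,
   so the basis vector 1^{(x)(n+1)} is 'X^n.  Addition, negation and zero are
   those of the vector space; the multiplication is the shuffle product below
   (NOT polynomial multiplication). *)
Definition sha_mul (F : fieldType) (lam : F) (a b : {poly F}) : {poly F} :=
  \sum_(m < size a) \sum_(n < size b) \sum_(k < m.+1)
     (a`_m * b`_n * ('C(m + n - k, n) * 'C(n, k))%:R * lam ^+ k)
       *: 'X^(m + n - k).

Definition sha_P (F : fieldType) (a : {poly F}) : {poly F} := a * 'X.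

Definition sha_ideal (F : fieldType) (lam : F) (I : {poly F} -> Prop) : Prop :=
  [/\ I 0,
      (forall x y, I x -> I y -> I (x + y)),
      (forall x, I x -> I (- x)) &
      (forall r x, I x -> I (sha_mul lam r x) /\ I (sha_mul lam x r))].

Definition sha_noetherian (F : fieldType) (lam : F) : Prop :=
  forall I : nat -> {poly F} -> Prop,
    (forall i, sha_ideal lam (I i)) ->
    (forall i x, I i x -> I i.+1 x) ->
    exists N, forall n, (N <= n)%N -> forall x, I n x <-> I N x.

(* Main.v *)
Require Import Defs.
From mathcomp Require Import all_boot all_order all_algebra.
Import GRing.Theory.
From mathcomp Require Import ring.

Lemma bin_key p i N n : prime p -> p ^ i %| N -> ~~ (p ^ i %| n) -> n <= N ->
  p %| 'C(N, n).
Proof.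
move=> pp dN dn leN.
have n0 : 0 < n by case: n dn {leN} => //; rewrite dvdn0.
have [q cpq nE] := pfactor_coprime pp n0.
set v := logn p n in nE.
have vi : v < i.
  rewrite ltnNge; apply/negP => iv; move/negP: dn; apply.
  by rewrite nE dvdn_mull // dvdn_exp2l.
have e : n * 'C(N, n) = N * 'C(N.-1, n.-1).
  by rewrite mul_bin_diag prednK.
have h : p ^ v.+1 %| n * 'C(N, n).
  rewrite e; apply: dvdn_mulr; apply: dvdn_trans dN.
  by rewrite dvdn_exp2l.
have h' : p ^ v * p %| p ^ v * (q * 'C(N, n)).
  by rewrite -expnSr mulnA (mulnC _ q) -nE.
move: h'; rewrite dvdn_pmul2l ?expn_gt0 ?prime_gt0 //.
by rewrite Gauss_dvdr // coprime_sym.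
Qed.

Lemma bin_sym m n k : k <= m -> k <= n ->
  'C(m + n - k, n) * 'C(n, k) = 'C(m + n - k, m) * 'C(m, k).
Proof.
move=> km kn.
apply/eqP; rewrite -(@eqn_pmul2r ((m-k)`! * k`! * (n-k)`!)); last by rewrite !muln_gt0 !fact_gt0.
have e1 : m + n - k - n = m - k by rewrite subnAC addnK.
have e2 : m + n - k - m = n - k by rewrite addnC subnAC addnK.
apply/eqP.
transitivity (m + n - k)`!.
  rewrite -(@bin_fact (m+n-k) n); last by rewrite addnC -addnBA // leq_addr.
  rewrite e1 -(bin_fact kn); ring.
rewrite -(@bin_fact (m+n-k) m); last by rewrite -addnBA // leq_addr.
rewrite e2 -(bin_fact km); ring.
Qed.

Local Open Scope ring_scope.

Lemma sha_coef0 (F : fieldType) (lam : F) (a b : {poly F}) j :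
  (forall m n k, (k <= m)%N -> (m + n - k)%N = j ->
     a`_m * b`_n * ('C(m + n - k, n) * 'C(n, k))%:R = 0) ->
  (sha_mul lam a b)`_j = 0.
Proof.
move=> H; rewrite /sha_mul coef_sum big1 // => [[m /= _]] _.
rewrite coef_sum big1 // => [[n /= _]] _.
rewrite coef_sum big1 // => [[k /= km]] _.
rewrite coefZ coefXn; case: eqP => [ej|]; last by rewrite mulr0.
by rewrite H ?mul0r ?mulr1 // ej.
Qed.

Theorem lemma3p2 (F : fieldType) (p : nat) (lam : F) :
  p \in [pchar F] -> ~ sha_noetherian lam.
Proof.
move=> pc Hn.
have pp := pcharf_prime pc.
pose I i (x : {poly F}) := forall j, (p ^ i %| j)%N -> x`_j = 0.
have Z : forall i m n k (x : {poly F}) c, I i x -> (p ^ i %| m + n - k)%N ->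
    (k <= m)%N -> (k <= n)%N -> x`_n * ('C(m + n - k, n) * 'C(n, k))%:R = c * 0.
  move=> i m n k x c Ix dN km kn.
  have [dn|dn] := boolP (p ^ i %| n)%N; first by rewrite Ix // mul0r mulr0.
  have hd : (p %| 'C(m + n - k, n))%N.
    by apply: bin_key dN dn _ => //; rewrite addnC -addnBA // leq_addr.
  have /dvdnP [r er] := hd.
  by rewrite er mulnAC natrM (pcharf0 pc) !mulr0.
have Hid : forall i, sha_ideal lam (I i.+1).
- move=> i; split.
  + by move=> j _; rewrite coef0.
  + by move=> x y Ix Iy j dj; rewrite coefD Ix ?Iy ?addr0.
  + by move=> x Ix j dj; rewrite coefN Ix ?oppr0.
  + move=> r x Ix; split; move=> j dj; apply: sha_coef0 => m n k km ej.
      have [kn|nk] := leqP k n; last by rewrite (bin_small nk) muln0 mulr0.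
      by rewrite -mulrA (Z i.+1 m n k x 0) ?mulr0 // ej.
    have [kn|nk] := leqP k n; last by rewrite (bin_small nk) muln0 mulr0.
    rewrite bin_sym // (addnC m n) -mulrA (mulrC r`_n) mulrA (Z i.+1 n m k x 0) ?mul0r ?mulr0 //.
    by rewrite addnC ej.
have Hinc : forall i x, I i.+1 x -> I i.+2 x.
- move=> i x Ix j dj; apply: Ix; apply: dvdn_trans dj.
  by rewrite dvdn_exp2l.
have [N HN] := Hn (fun i => I i.+1) Hid Hinc.
have := HN N.+1 (leqnSn N) 'X^(p ^ N.+1).
have h1 : I N.+2 'X^(p ^ N.+1).
  move=> j dj; rewrite coefXn; case: eqP => // ej.
  move: dj; rewrite ej dvdn_Pexp2l ?ltnn // prime_gt1 //.
case=> /(_ h1) /(_ (p ^ N.+1)%N (dvdnn _)).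
by rewrite coefXn eqxx => /eqP; rewrite oner_eq0.
Qed.
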